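(* Let $C$ be a nonempty subset of a Banach space $X$ and let $T:C\to C$ be a Kannan mapping. Then $T$ is an orbitally Kannan mapping which diminishes the radius of orbits.
   Context: $T:C\to C$ is Kannan if $\|Tx-Ty\|\le\frac12(\|x-Tx\|+\|y-Ty\|)$ for all $x,y\in C$. For $x\in X$ and $A\subseteq X$, $r_x(A)=\sup\{\|x-y\|:y\in A\}$; $O_T(x)=\{x,Tx,T^2x,\dots\}$. $T$ is orbitally Kannan if $\|Tx-Ty\|\le\frac12\big(r_x(O_T(x))+r_y(O_T(y))\big)$ for all $x,y\in C$. $T$ diminishes the radius of orbits if $r_{Tx}(O_T(Tx))\le r_x(O_T(x))$ for all $x\in C$. *)

(* Defs.v *)
From HB Require Import structures.
From mathcomp Require Import all_boot all_order all_algebra.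
From mathcomp Require Import all_classical all_reals all_analysis.
Set Implicit Arguments. Unset Strict Implicit. Unset Printing Implicit Defensive.
Import Order.TTheory GRing.Theory Num.Theory.
Local Open Scope classical_set_scope.
Local Open Scope ring_scope.

Section Defs.
Context {R : realType} {X : normedModType R}.

(* Kannan mapping on C (T maps C into C is a separate hypothesis). *)
Definition kannan (C : set X) (T : X -> X) : Prop :=
  forall x y, C x -> C y ->
    `|T x - T y| <= 2^-1 * (`|x - T x| + `|y - T y|).

Definition orbit (T : X -> X) (x : X) : set X := range (fun n : nat => iter n T x).

Definition radius (x : X) (A : set X) : \bar R :=
  ereal_sup [set (`|x - y|)%:E | y in A].

Definition orbitally_kannan (C : set X) (T : X -> X) : Prop :=
  forall x y, C x -> C y ->
    ((`|T x - T y|)%:E <= (2^-1)%:E * (radius x (orbit T x) + radius y (orbit T y)))%E.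

Definition diminishes_radius_of_orbits (C : set X) (T : X -> X) : Prop :=
  forall x, C x -> (radius (T x) (orbit T (T x)) <= radius x (orbit T x))%E.

End Defs.

(* Main.v *)
Require Import Defs.
From HB Require Import structures.
From mathcomp Require Import all_boot all_order all_algebra.
From mathcomp Require Import all_classical all_reals all_analysis.
From mathcomp Require Import lra.
Import Order.TTheory GRing.Theory Num.Theory.
Local Open Scope classical_set_scope.
Local Open Scope ring_scope.

Lemma radius_ge (R : realType) (X : normedModType R) (T : X -> X) x n :
  ((`|x - iter n T x|)%:E <= Defs.radius x (Defs.orbit T x))%E.
Proof.
apply: (@ereal_sup_ubound R); exists (iter n T x) => //; by exists n.
Qed.

Theorem lemma4p1 (R : realType) (X : completeNormedModType R)
  (C : set X) (T : X -> X) :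
  C !=set0 ->
  (forall x, C x -> C (T x)) ->
  kannan C T ->
  orbitally_kannan C T /\ diminishes_radius_of_orbits C T.
Proof.
move=> _ CT K; split.
  move=> x y Cx Cy.
  apply: (le_trans (y := ((2^-1)%:E * (`|x - T x| + `|y - T y|)%:E)%E)).
    by rewrite -EFinM lee_fin; apply: K.
  apply: lee_wpmul2l; first by rewrite lee_fin invr_ge0.
  rewrite EFinD; apply: leeD.
    exact: (@radius_ge R X T x 1).
  exact: (@radius_ge R X T y 1).
move=> x Cx.
have Ci : forall n, C (iter n T x).
  by elim=> [|n IH] //=; apply: CT.
have dec : forall n, `|iter n T x - iter n.+1 T x| <= `|x - T x|.
  elim=> [|n IH] //.
  apply: le_trans IH.
  have := K _ _ (Ci n) (Ci n.+1).
  rewrite [iter n.+2 T x]/= [iter n.+1 T x]/=.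
  set a := `|iter n T x - T (iter n T x)|.
  set b := `|T (iter n T x) - T (T (iter n T x))|.
  move=> h; have two : (0:R) <= 2 by lra.
  have := ler_wpM2l two h; rewrite mulrA mulfV // mul1r; lra.
apply: ge_ereal_sup => _ [_ [n _ <-] <-].
rewrite -iterSr.
apply: le_trans (@radius_ge R X T x 1).
rewrite lee_fin /=.
have := K _ _ Cx (Ci n).
have := dec n.
rewrite [iter n.+1 T x]/=.
set a := `|x - T x|.
move=> h1 h2.
have two : (0:R) <= 2 by lra.
have := ler_wpM2l two h2; rewrite mulrA mulfV // mul1r.
move: h1; rewrite /=.
set b := `|T x - _|; set c := `|iter n T x - _|.
move=> h1 h3; clearbody a b c; clear -h1 h3; lra.
Qed.
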